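(* Let $X$ be a $T_1$ space and $\mathcal{P}$ an ideal of closed subsets of $X$ such that $X$ is $\tau\mathcal{P}$-pseudocompact. Then $C(X)_\mathcal{P}$ is closed under uniform limits if and only if $C^*(X)_\mathcal{P}$, equipped with the norm $\|f\|=\sup\{|f(x)|\colon x\in X\}$, is a Banach space.
   Context: An ideal of closed subsets of $X$ is a family $\mathcal{P}$ of closed subsets closed under finite unions and under passing to closed subsets. $D_f$ is the set of discontinuity points of $f\in\mathbb{R}^X$; $C(X)_\mathcal{P}=\{f\in\mathbb{R}^X\colon \overline{D_f}\in\mathcal{P}\}$ and $C^*(X)_\mathcal{P}$ is the set of its bounded members. $X$ is $\tau\mathcal{P}$-pseudocompact if $C(X)_\mathcal{P}=C^*(X)_\mathcal{P}$. $C(X)_\mathcal{P}$ is closed under uniform limits if whenever a sequence in $C(X)_\mathcal{P}$ converges uniformly on $X$ to $f\in\mathbb{R}^X$, then $f\in C(X)_\mathcal{P}$. *)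

(* Defs.v *)
From HB Require Import structures.
From mathcomp Require Import all_boot all_order all_algebra.
From mathcomp Require Import all_classical all_reals all_analysis.
Set Implicit Arguments. Unset Strict Implicit. Unset Printing Implicit Defensive.
Import Order.TTheory GRing.Theory Num.Theory numFieldNormedType.Exports.
Local Open Scope classical_set_scope.
Local Open Scope ring_scope.

(* An ideal of closed subsets of X: a (nonempty, hence containing the empty
   set) family of closed sets, closed under finite unions and under passing
   to closed subsets. *)
Definition closed_ideal (X : topologicalType) (P : set (set X)) : Prop :=
  [/\ (forall A, P A -> closed A),
      P set0,
      (forall A B, P A -> P B -> P (A `|` B)) &
      (forall A B, P A -> closed B -> B `<=` A -> P B)].

Definition discont_pts (X : topologicalType) (R : realType) (f : X -> R) : set X :=
  [set x | ~ {for x, continuous f}].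

Definition CP (X : topologicalType) (R : realType) (P : set (set X)) : set (X -> R) :=
  [set f | P (closure (discont_pts f))].
Arguments CP {X} R P.

Definition bounded_fun (X : Type) (R : realType) (f : X -> R) : Prop :=
  exists M : R, forall x, `|f x| <= M.

Definition CPstar (X : topologicalType) (R : realType) (P : set (set X)) : set (X -> R) :=
  [set f | CP R P f /\ bounded_fun f].
Arguments CPstar {X} R P.

Definition tauP_pseudocompact (X : topologicalType) (R : realType) (P : set (set X)) : Prop :=
  CP R P = CPstar R P.

Definition unif_conv (X : Type) (R : realType) (f : nat -> X -> R) (g : X -> R) : Prop :=
  forall e : R, 0 < e -> exists N : nat, forall n, (N <= n)%N -> forall x, `|f n x - g x| < e.

Definition closed_under_unif_limits (X : topologicalType) (R : realType) (P : set (set X)) : Prop :=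
  forall (f : nat -> X -> R) (g : X -> R),
    (forall n, CP R P (f n)) -> unif_conv f g -> CP R P g.

Definition sup_norm (X : Type) (R : realType) (f : X -> R) : R :=
  sup [set `|f x| | x in [set: X]].

(* A set of real functions on X, equipped with the sup norm, is a Banach
   space: it is a linear subspace of R^X (so a normed space for the sup norm,
   its elements being bounded) and every Cauchy sequence for the sup norm
   converges in the sup norm to an element of the set. *)
Definition is_banach_sup (X : Type) (R : realType) (S : set (X -> R)) : Prop :=
  [/\ (forall f, S f -> bounded_fun f),
      S (fun _ => 0),
      (forall f g, S f -> S g -> S (fun x => f x + g x)),
      (forall (a : R) f, S f -> S (fun x => a * f x)) &
      (forall u : nat -> X -> R, (forall n, S (u n)) ->
         (forall e : R, 0 < e -> exists N : nat, forall m n, (N <= m)%N -> (N <= n)%N ->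
             sup_norm (fun x => u m x - u n x) < e) ->
         exists2 g, S g &
           forall e : R, 0 < e -> exists N : nat, forall n, (N <= n)%N ->
             sup_norm (fun x => u n x - g x) < e)].

(* Main.v *)
Require Import Defs.
From HB Require Import structures.
From mathcomp Require Import all_boot all_order all_algebra.
From mathcomp Require Import all_classical all_reals all_analysis.
From mathcomp Require Import lra.
Set Implicit Arguments. Unset Strict Implicit. Unset Printing Implicit Defensive.
Import Order.TTheory GRing.Theory Num.Theory numFieldNormedType.Exports.
Local Open Scope classical_set_scope.
Local Open Scope ring_scope.

Section H.
Variable R : realType.

Lemma sn_ge (X : Type) (f : X -> R) x : Defs.bounded_fun f -> `|f x| <= Defs.sup_norm f.
Proof.
case=> M HM; apply: ub_le_sup; last by exists x.
by exists M => _ [y _ <-]; apply: HM.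
Qed.

Lemma sn_le (X : Type) (f : X -> R) e : 0 <= e -> (forall x, `|f x| <= e) -> Defs.sup_norm f <= e.
Proof.
move=> e0 H; rewrite /Defs.sup_norm.
case: (pselect ([set `|f x| | x in [set: X]] !=set0)) => ne.
  by apply: ge_sup => // _ [y _ <-].
suff -> : [set `|f x| | x in [set: X]] = set0 by rewrite sup0.
by apply/seteqP; split=> // y Sy; exfalso; apply: ne; exists y.
Qed.

Lemma bdd_sub (X : Type) (f g : X -> R) : Defs.bounded_fun f -> Defs.bounded_fun g ->
  Defs.bounded_fun (fun x => f x - g x).
Proof.
case=> M HM [N HN]; exists (M + N) => x.
by apply: (le_trans (ler_normB _ _)); apply: lerD.
Qed.

Lemma seq_ev (u : nat -> R) l e : u @ \oo --> l -> 0 < e -> exists N, forall n, (N <= n)%N -> `|l - u n| < e.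
Proof.
move/cvgrPdist_lt => H e0; have := H e e0; case=> N _ HN; exists N => n Nn; exact: HN.
Qed.

Lemma CP_of (X : topologicalType) (P : set (set X)) (f g h : X -> R) :
  closed_ideal P -> CP R P f -> CP R P g ->
  discont_pts h `<=` discont_pts f `|` discont_pts g -> CP R P h.
Proof.
case=> cl P0 PU PS Pf Pg sub; apply: (PS _ _ (PU _ _ Pf Pg)); first exact: closed_closure.
rewrite -closureU; exact: closureS.
Qed.

Lemma disc_add (X : topologicalType) (f g : X -> R) :
  discont_pts (fun x => f x + g x) `<=` discont_pts f `|` discont_pts g.
Proof.
move=> x /= Hn.
case: (pselect ({for x, continuous f})) => hf; last by left.
case: (pselect ({for x, continuous g})) => hg; last by right.
exfalso; apply: Hn; exact: (cvgD hf hg).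
Qed.

Lemma disc_scale (X : topologicalType) (a : R) (f : X -> R) :
  discont_pts (fun x => a * f x) `<=` discont_pts f `|` discont_pts f.
Proof.
move=> x /= Hn; left => hf; apply: Hn; exact: (cvgMl_tmp hf).
Qed.

Lemma disc_cst (X : topologicalType) : discont_pts (fun _ : X => (0:R)) = set0.
Proof.
apply/seteqP; split => // x /= Hn; apply: Hn; exact: cvg_cst.
Qed.
End H.

Theorem theorem4p4 (R : realType) (X : topologicalType) (P : set (set X)) :
  accessible_space X ->
  closed_ideal P ->
  tauP_pseudocompact R P ->
  (closed_under_unif_limits R P <-> is_banach_sup (CPstar R P)).
Proof.
move=> _ cid pc; have [cl P0 PU PS] := cid.
split.
- move=> cu; split.
  + by move=> f [].
  + split; last by exists 0 => x; rewrite normr0.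
    by rewrite /CP /= disc_cst closure0.
  + move=> f g [Pf [M HM]] [Pg [N HN]]; split.
      exact: (CP_of cid Pf Pg (@disc_add _ _ f g)).
    exists (M + N) => x; apply: (le_trans (ler_normD _ _)); exact: lerD.
  + move=> a f [Pf [M HM]]; split.
      exact: (CP_of cid Pf Pf (@disc_scale _ _ a f)).
    exists (`|a| * M) => x; rewrite normrM; exact: ler_wpM2l.
  + move=> u Su Cu.
    have bu n : Defs.bounded_fun (u n) by case: (Su n).
    have pw x : cvg (u n x @[n --> \oo]).
      apply/cauchy_cvgP; apply: cauchy_exP => e e0.
      have [N HN] := Cu e e0.
      exists (u N x); exists N => // n Nn /=.
      rewrite -ball_normE /=.
      apply: le_lt_trans (HN N n (leqnn N) Nn).
      exact: (sn_ge x (bdd_sub (bu N) (bu n))).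
    pose g x := lim (u n x @[n --> \oo]).
    have key e : 0 < e -> exists N, forall n, (N <= n)%N -> forall x, `|u n x - g x| <= e.
      move=> e0; have [N HN] := Cu e e0; exists N => n Nn x.
      apply/ler_addgt0Pr => d d0.
      have [N' HN'] := seq_ev (pw x) d0.
      have Hm1 : (N <= maxn N N')%N by rewrite leq_maxl.
      have Hm2 : (N' <= maxn N N')%N by rewrite leq_maxr.
      apply: (le_trans (ler_distD (u (maxn N N') x) _ _)); apply: lerD.
        apply: ltW; apply: le_lt_trans (HN n _ Nn Hm1).
        exact: (sn_ge x (bdd_sub (bu n) (bu _))).
      by rewrite distrC; apply: ltW; apply: HN'.
    have unif : unif_conv u g.
      move=> e e0; have [N HN] := key (e / 2) (divr_gt0 e0 (ltr0Sn _ _)).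
      exists N => n Nn x; apply: le_lt_trans (HN n Nn x) _.
      by rewrite ltr_pdivrMr // ltr_pMr // ltr1n.
    have Pg : CP R P g by apply: (cu u g _ unif) => n; case: (Su n).
    exists g.
      by move: Pg; rewrite pc.
    move=> e e0; have [N HN] := key (e / 2) (divr_gt0 e0 (ltr0Sn _ _)).
    exists N => n Nn; apply: (@le_lt_trans _ _ (e / 2)).
      apply: sn_le; first by apply: ltW; apply: divr_gt0.
      exact: HN.
    by rewrite ltr_pdivrMr // ltr_pMr // ltr1n.
- move=> [_ _ _ _ cmp] f g Hf Hu.
  have Sf n : CPstar R P (f n) by rewrite -pc.
  have [h Sh Hh] : exists2 h, CPstar R P h & forall e : R, 0 < e -> exists N : nat,
      forall n, (N <= n)%N -> Defs.sup_norm (fun x => f n x - h x) < e.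
    apply: cmp => // e e0.
    have [N HN] := Hu (e / 4) (divr_gt0 e0 (ltr0Sn _ _)).
    exists N => m n Nm Nn; apply: (@le_lt_trans _ _ (e / 2)).
      apply: sn_le; first by apply: ltW; apply: divr_gt0.
      move=> x; apply: (le_trans (ler_distD (g x) _ _)).
      rewrite [X in X + _]distrC.
      apply: (@le_trans _ _ (e / 4 + e / 4)); first by apply: lerD; rewrite distrC; apply: ltW; [exact: HN m Nm x|exact: HN n Nn x].
      lra.
    by rewrite ltr_pdivrMr // ltr_pMr // ltr1n.
  suff -> : g = h by case: Sh.
  apply/funext => x; apply/eqP; rewrite -subr_eq0 -normr_le0.
  apply/ler_addgt0Pr => d d0; rewrite add0r.
  have [N1 H1] := Hu (d / 2) (divr_gt0 d0 (ltr0Sn _ _)).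
  have [N2 H2] := Hh (d / 2) (divr_gt0 d0 (ltr0Sn _ _)).
  have Hm1 : (N1 <= maxn N1 N2)%N by rewrite leq_maxl.
  have Hm2 : (N2 <= maxn N1 N2)%N by rewrite leq_maxr.
  apply: (le_trans (ler_distD (f (maxn N1 N2) x) _ _)).
  rewrite [d in _ <= d](splitr d); apply: lerD.
    by rewrite distrC; apply: ltW; apply: H1.
  apply: ltW; apply: le_lt_trans (H2 _ Hm2).
  apply: (sn_ge x (bdd_sub _ _)); [by case: (Sf (maxn N1 N2)) | by case: Sh].
Qed.
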